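(* Let $S$ be a pair of pants with boundary components $A_1,A_2,A_3$, let $\pi$ be a convex projective structure on $S$ with monodromy $\rho_\pi\colon \pi_1(S)\to\mathrm{SL}_3(\mathbb{R})$, and let $\lambda_i,\tau_i$ ($i=1,2,3$) be its Goldman boundary parameters and $\tau_{111}(T_\pm)$, $\sigma_1(B_j)$, $\sigma_2(B_j)$ its Fock–Goncharov coordinates (as defined in the context). Then, for $i=1,2,3$ (indices modulo 3), $$\lambda_i=\exp\Big(\tfrac13\sigma_1(B_{i+1})+\tfrac23\sigma_2(B_{i+1})+\tfrac23\sigma_1(B_{i-1})+\tfrac13\sigma_2(B_{i-1})+\tfrac23\tau_{111}(T_+)+\tfrac23\tau_{111}(T_-)\Big)$$ and $$\tau_i=\big(e^{-\sigma_1(B_{i+1})-\sigma_2(B_{i-1})}+1\big)\exp\Big(\tfrac13\sigma_1(B_{i+1})-\tfrac13\sigma_2(B_{i+1})-\tfrac13\sigma_1(B_{i-1})+\tfrac13\sigma_2(B_{i-1})-\tfrac13\tau_{111}(T_+)-\tfrac13\tau_{111}(T_-)\Big).$$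
   Context: $S$ is a compact oriented pair of pants with boundary components $A_1,A_2,A_3$, each oriented opposite to the boundary orientation induced by $S$ (and also regarded as conjugacy classes in $\pi_1(S)$). A convex projective structure $\pi$ on $S$ has a developing map $\widetilde S\to\mathbb{RP}^2$ (a homeomorphism onto a convex domain) equivariant under a monodromy $\rho_\pi\colon\pi_1(S)\to\mathrm{SL}_3(\mathbb{R})$, well defined up to conjugation. For such $\pi$, $\rho_\pi(A_i)$ has distinct positive real eigenvalues $0<\lambda_i<\mu_i<\nu_i$; Goldman's boundary parameters are $\lambda_i$ and $\tau_i=\mu_i+\nu_i$. The unstable flag of $\rho_\pi(A_i)$ is the flag $F^{(1)}\subset F^{(2)}$ where $F^{(1)}$ is the $\lambda_i$-eigenline and $F^{(2)}$ is spanned by the $\lambda_i$- and $\mu_i$-eigenlines. Identify the interior of $S$ with $S^2-\{p_1,p_2,p_3\}$, $p_i$ corresponding to $A_i$, and decompose it into two ideal triangles $T_+,T_-$ glued along three disjoint lines $B_1,B_2,B_3$, where $B_i$ goes (and is oriented) from $p_{i-1}$ to $p_{i+1}$ (indices mod 3), and $p_1,p_2,p_3$ occur in this order clockwise around $T_+$ (counterclockwise around $T_-$). Each vertex of a lift of $T_\pm$ to $\widetilde S$ is fixed by a conjugate $g A_j g^{-1}$ of some $A_j$; assign to it the unstable flag of $\rho_\pi(gA_jg^{-1})$ (equivariantly). For a flag $F$, $f^{(a)}$ denotes any nonzero element of $\Lambda^a F^{(a)}$, and wedges of total degree 3 are identified with real numbers via a fixed volume form. Triangle invariants: if a lift $\widetilde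 T_+$ has vertices with flags $F_1,F_2,F_3$ (vertices fixed by conjugates of $A_1,A_2,A_3$, occurring clockwise in this order), then $\tau_{111}(T_+)=\log\Big(\frac{f_1^{(2)}\wedge f_2^{(1)}}{f_2^{(1)}\wedge f_3^{(2)}}\frac{f_1^{(1)}\wedge f_3^{(2)}}{f_1^{(1)}\wedge f_2^{(2)}}\frac{f_2^{(2)}\wedge f_3^{(1)}}{f_1^{(2)}\wedge f_3^{(1)}}\Big)$; if a lift $\widetilde T_-$ has vertex flags $F'_1,F'_2,F'_3$ (counterclockwise in this order), then $\tau_{111}(T_-)=\log\Big(\frac{f_1'^{(2)}\wedge f_3'^{(1)}}{f_2'^{(2)}\wedge f_3'^{(1)}}\frac{f_1'^{(1)}\wedge f_2'^{(2)}}{f_1'^{(1)}\wedge f_3'^{(2)}}\frac{f_2'^{(1)}\wedge f_3'^{(2)}}{f_1'^{(2)}\wedge f_2'^{(1)}}\Big)$. Shear invariants: lift $B_i$ to $\widetilde B_i$ with adjacent lifts $\widetilde T_+,\widetilde T_-$; let $F_{i+1},F_{i-1}$ be the flags at the positive and negative endpoints of $\widetilde B_i$, $F_i$ the flag at the third vertex of $\widetilde T_+$, and $F_i'$ the flag at the third vertex of $\widetilde T_-$. Then $\sigma_1(B_i)=\log\Big(-\frac{f_{i+1}^{(1)}\wedge f_{i-1}^{(1)}\wedge f_i^{(1)}}{f_{i+1}^{(1)}\wedge f_{i-1}^{(1)}\wedge f_i'^{(1)}}\frac{f_{i-1}^{(2)}\wedge f_i'^{(1)}}{f_{i-1}^{(2)}\wedge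 f_i^{(1)}}\Big)$ and $\sigma_2(B_i)=\log\Big(-\frac{f_{i+1}^{(1)}\wedge f_{i-1}^{(1)}\wedge f_i'^{(1)}}{f_{i+1}^{(1)}\wedge f_{i-1}^{(1)}\wedge f_i^{(1)}}\frac{f_{i+1}^{(2)}\wedge f_i^{(1)}}{f_{i+1}^{(2)}\wedge f_i'^{(1)}}\Big)$. (All quantities inside the logarithms are positive.) *)

(* Defs.v *)
From HB Require Import structures.
From mathcomp Require Import all_boot all_order all_algebra.
From mathcomp Require Import all_classical all_reals all_analysis.
Set Implicit Arguments. Unset Strict Implicit. Unset Printing Implicit Defensive.
Import Order.TTheory GRing.Theory Num.Theory.
Local Open Scope ring_scope.

Section Defs.
Variable R : realType.

Definition cols3 (u v w : 'cV[R]_3) : 'M[R]_3 :=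
  \matrix_(i < 3, j < 3)
    (if (j : nat) == 0%N then u i 0 else if (j : nat) == 1%N then v i 0 else w i 0).

(* u /\ v /\ w identified with a real number via the standard volume form. *)
Definition wedge3 (u v w : 'cV[R]_3) : R := \det (cols3 u v w).

Definition eigvec (M : 'M[R]_3) (l : R) (v : 'cV[R]_3) : Prop :=
  v != 0 /\ M *m v = l *: v.

(* A (complete) flag F^(1) < F^(2) is encoded by a pair (a, b) with
   F^(1) = span a and F^(2) = span (a, b); then f^(1) = a and f^(2) = a /\ b. *)
Definition flag := ('cV[R]_3 * 'cV[R]_3)%type.

Definition flag_act (M : 'M[R]_3) (F : flag) : flag := (M *m F.1, M *m F.2).

Definition w12 (F G : flag) : R := wedge3 F.1 G.1 G.2.
Definition w21 (F G : flag) : R := wedge3 F.1 F.2 G.1.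
Definition w111 (F G H : flag) : R := wedge3 F.1 G.1 H.1.

Definition tplus_arg (F1 F2 F3 : flag) : R :=
  (w21 F1 F2 / w12 F2 F3) * (w12 F1 F3 / w12 F1 F2) * (w21 F2 F3 / w21 F1 F3).
Definition tminus_arg (F1 F2 F3 : flag) : R :=
  (w21 F1 F3 / w21 F2 F3) * (w12 F1 F2 / w12 F1 F3) * (w12 F2 F3 / w21 F1 F2).
(* Fp = flag at positive endpoint, Fm = at negative endpoint,
   F = third vertex of T_+ lift, F' = third vertex of T_- lift *)
Definition sigma1_arg (Fp Fm F F' : flag) : R :=
  - (w111 Fp Fm F / w111 Fp Fm F') * (w21 Fm F' / w21 Fm F).
Definition sigma2_arg (Fp Fm F F' : flag) : R :=
  - (w111 Fp Fm F' / w111 Fp Fm F) * (w21 Fp F / w21 Fp F').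

Definition tplus F1 F2 F3 : R := ln (tplus_arg F1 F2 F3).
Definition tminus F1 F2 F3 : R := ln (tminus_arg F1 F2 F3).
Definition sigma1 Fp Fm F F' : R := ln (sigma1_arg Fp Fm F F').
Definition sigma2 Fp Fm F F' : R := ln (sigma2_arg Fp Fm F F').

End Defs.

(* cyclic successor / predecessor on the index set {0,1,2} ~ {A_1,A_2,A_3} *)
Definition nxt (i : 'I_3) : 'I_3 := ordS i.
Definition prv (i : 'I_3) : 'I_3 := ord_pred i.

(* Main.v *)
Require Import Defs.
From HB Require Import structures.
From mathcomp Require Import all_boot all_order all_algebra.
From mathcomp Require Import all_classical all_reals all_analysis.
From mathcomp Require Import ring lra.
Import Order.TTheory GRing.Theory Num.Theory.
Local Open Scope ring_scope.
Set Implicit Arguments. Unset Strict Implicit.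

Lemma det3 (R : comNzRingType) (A : 'M[R]_3) :
  \det A = A 0 0 * (A 1 1 * A 2 2 - A 1 2 * A 2 1)
         - A 0 1 * (A 1 0 * A 2 2 - A 1 2 * A 2 0)
         + A 0 2 * (A 1 0 * A 2 1 - A 1 1 * A 2 0).
Proof.
rewrite (expand_det_row _ 0) !big_ord_recl big_ord0 /cofactor.
rewrite !(expand_det_row _ 0) !big_ord_recl !big_ord0 /cofactor.
rewrite !det_mx11 /= !mxE /=.
pose a (x y : nat) := A (inord x) (inord y).
have E : forall x y : 'I_3, A x y = a x y by move=> x y; rewrite /a !inord_val.
rewrite !E; clearbody a => /=.
rewrite /bump /=.
ring.
Qed.

Lemma wedge3E (R : realType) (u v w : 'cV[R]_3) : wedge3 u v w =
  u 0 0 * (v 1 0 * w 2 0 - w 1 0 * v 2 0) - v 0 0 * (u 1 0 * w 2 0 - w 1 0 * u 2 0)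
  + w 0 0 * (u 1 0 * v 2 0 - v 1 0 * u 2 0).
Proof. by rewrite /wedge3 det3 /cols3 !mxE /=. Qed.

Lemma wZ1 (R : realType) k (u v w : 'cV[R]_3) : wedge3 (k *: u) v w = k * wedge3 u v w.
Proof. rewrite !wedge3E !mxE; ring. Qed.
Lemma wZ2 (R : realType) k (u v w : 'cV[R]_3) : wedge3 u (k *: v) w = k * wedge3 u v w.
Proof. rewrite !wedge3E !mxE; ring. Qed.
Lemma wZ3 (R : realType) k (u v w : 'cV[R]_3) : wedge3 u v (k *: w) = k * wedge3 u v w.
Proof. rewrite !wedge3E !mxE; ring. Qed.
Lemma wcyc (R : realType) (u v w : 'cV[R]_3) : wedge3 u v w = wedge3 v w u.
Proof. rewrite !wedge3E; ring. Qed.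

Lemma wmul (R : realType) (M : 'M[R]_3) (u v w : 'cV[R]_3) :
  wedge3 (M *m u) (M *m v) (M *m w) = \det M * wedge3 u v w.
Proof.
rewrite /wedge3 -det_mulmx; congr (\det _).
apply/matrixP => i j; rewrite !mxE.
case: j => [[|[|[|//]]] Hj] /=; apply: eq_bigr => k _; by rewrite !mxE.
Qed.


Lemma cV0P (R : realType) (u : 'cV[R]_3) : (forall i, u i 0 = 0) -> u = 0.
Proof. move=> H; apply/matrixP => i j; by rewrite (ord1 j) H mxE. Qed.

Lemma eig_indep (R : realType) (M : 'M[R]_3) (l m n : R) (u v w : 'cV[R]_3) :
  eigvec M l u -> eigvec M m v -> eigvec M n w ->
  l != m -> l != n -> m != n -> wedge3 u v w != 0.
Proof.
move=> [u0 Mu] [v0 Mv] [w0 Mw] lm ln mn.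
apply/negP => /eqP H0.
have : \det (cols3 u v w)^T == 0 by rewrite det_tr -/(wedge3 u v w) H0.
case/det0P => x xnz hx.
set c0 := x 0 0; set c1 := x 0 1; set c2 := x 0 2.
have Z0 : c0 *: u + c1 *: v + c2 *: w = 0.
  apply: cV0P => i; have := congr1 (fun A : 'M[R]_(1,3) => A 0 i) hx.
  rewrite !mxE !big_ord_recl big_ord0 !mxE /=.
  move=> <-; rewrite /c0 /c1 /c2 /bump /=.
  have -> : (lift 0 (0 : 'I_2) : 'I_3) = 1 by apply: val_inj.
  have -> : (lift 0 (lift 0 (0 : 'I_1)) : 'I_3) = 2 by apply: val_inj.
  ring.
have Z1 : c0 *: (l *: u) + c1 *: (m *: v) + c2 *: (n *: w) = 0.
  by rewrite -Mu -Mv -Mw !scalemxAr -!mulmxDr Z0 mulmx0.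
have Z2 : c0 *: (l *: (l *: u)) + c1 *: (m *: (m *: v)) + c2 *: (n *: (n *: w)) = 0.
  by rewrite -{1}Mu -{1}Mv -{1}Mw !scalemxAr -!mulmxDr Z1 mulmx0.
have E : forall i, [/\ c0 * (l - m) * (l - n) * u i 0 = 0,
                     c1 * (m - l) * (m - n) * v i 0 = 0 &
                     c2 * (n - l) * (n - m) * w i 0 = 0].
  move=> i.
  have e0 := congr1 (fun A : 'cV[R]_3 => A i 0) Z0; have e1 := congr1 (fun A : 'cV[R]_3 => A i 0) Z1;
  have e2 := congr1 (fun A : 'cV[R]_3 => A i 0) Z2; move: e0 e1 e2; rewrite !mxE => e0 e1 e2.
  split.
  - have -> : c0 * (l - m) * (l - n) * u i 0 =
      (c0 * (l * (l * u i 0)) + c1 * (m * (m * v i 0)) + c2 * (n * (n * w i 0)))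
      - (m + n) * (c0 * (l * u i 0) + c1 * (m * v i 0) + c2 * (n * w i 0))
      + m * n * (c0 * u i 0 + c1 * v i 0 + c2 * w i 0) by ring.
    by rewrite e0 e1 e2; ring.
  - have -> : c1 * (m - l) * (m - n) * v i 0 =
      (c0 * (l * (l * u i 0)) + c1 * (m * (m * v i 0)) + c2 * (n * (n * w i 0)))
      - (l + n) * (c0 * (l * u i 0) + c1 * (m * v i 0) + c2 * (n * w i 0))
      + l * n * (c0 * u i 0 + c1 * v i 0 + c2 * w i 0) by ring.
    by rewrite e0 e1 e2; ring.
  - have -> : c2 * (n - l) * (n - m) * w i 0 =
      (c0 * (l * (l * u i 0)) + c1 * (m * (m * v i 0)) + c2 * (n * (n * w i 0)))
      - (l + m) * (c0 * (l * u i 0) + c1 * (m * v i 0) + c2 * (n * w i 0))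
      + l * m * (c0 * u i 0 + c1 * v i 0 + c2 * w i 0) by ring.
    by rewrite e0 e1 e2; ring.
have sub0 : forall a b : R, a != b -> a - b != 0 by move=> a b; rewrite subr_eq0.
have C0 : c0 = 0.
  apply/eqP/negPn/negP => nz; move/eqP: u0; apply; apply: cV0P => i.
  have [H _ _] := E i; move/eqP: H; rewrite !mulf_eq0 (negbTE nz) /=.
  rewrite (negbTE (sub0 _ _ lm)) (negbTE (sub0 _ _ ln)) /=; by move/eqP.
have C1 : c1 = 0.
  apply/eqP/negPn/negP => nz; move/eqP: v0; apply; apply: cV0P => i.
  have [_ H _] := E i; move/eqP: H; rewrite !mulf_eq0 (negbTE nz) /=.
  rewrite eq_sym in lm; rewrite (negbTE (sub0 _ _ lm)) (negbTE (sub0 _ _ mn)) /=; by move/eqP.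
have C2 : c2 = 0.
  apply/eqP/negPn/negP => nz; move/eqP: w0; apply; apply: cV0P => i.
  have [_ _ H] := E i; move/eqP: H; rewrite !mulf_eq0 (negbTE nz) /=.
  rewrite eq_sym in ln; rewrite eq_sym in mn.
  rewrite (negbTE (sub0 _ _ ln)) (negbTE (sub0 _ _ mn)) /=; by move/eqP.
move/eqP: xnz; apply; apply/matrixP => i j; rewrite (ord1 i) mxE.
case: j => [[|[|[|//]]] Hj].
- by rewrite -C0 /c0; congr (x 0 _); apply: val_inj.
- by rewrite -C1 /c1; congr (x 0 _); apply: val_inj.
- by rewrite -C2 /c2; congr (x 0 _); apply: val_inj.
Qed.

Lemma det_eig (R : realType) (M : 'M[R]_3) (l m n : R) (u v w : 'cV[R]_3) :
  eigvec M l u -> eigvec M m v -> eigvec M n w ->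
  l != m -> l != n -> m != n -> \det M = l * m * n.
Proof.
move=> hu hv hw lm ln mn.
have nz := eig_indep hu hv hw lm ln mn.
have := wmul M u v w; rewrite hu.2 hv.2 hw.2 wZ1 wZ2 wZ3 => H.
apply/eqP; rewrite -(inj_eq (mulIf nz)); apply/eqP; rewrite -H; ring.
Qed.


Lemma app3 (R : realType) (A B C : 'M[R]_3) (l : R) (v : 'cV[R]_3) :
  A *m B *m C = 1%:M -> C *m v = l *: v -> l != 0 -> A *m (B *m v) = l^-1 *: v.
Proof.
move=> h hv l0.
have : l *: (A *m (B *m v)) = v.
  by rewrite !scalemxAr -hv !mulmxA h; apply: mul1mx.
move=> e; by rewrite -[in RHS]e scalerA mulVf // scale1r.
Qed.

Lemma Sm (R : realType) (Mm Mp Mc : 'M[R]_3) am bm ac lm mm lc :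
  Mm *m Mp *m Mc = 1%:M -> \det Mm = 1 -> Mm *m am = lm *: am -> Mm *m bm = mm *: bm ->
  Mc *m ac = lc *: ac -> lc != 0 ->
  wedge3 am bm (Mp *m ac) * lc = lm * mm * wedge3 am bm ac.
Proof.
move=> h d ha hb hc l0.
have e := app3 h hc l0.
have := wmul Mm am bm (Mp *m ac); rewrite d ha hb e wZ1 wZ2 wZ3 mul1r => <-.
by field.
Qed.

Lemma Sp (R : realType) (Mp : 'M[R]_3) ap bp ac lp mp :
  \det Mp = 1 -> Mp *m ap = lp *: ap -> Mp *m bp = mp *: bp ->
  wedge3 ap bp (Mp *m ac) * (lp * mp) = wedge3 ap bp ac.
Proof.
move=> d ha hb.
have := wmul Mp ap bp ac; rewrite d ha hb wZ1 wZ2 mul1r => <-; ring.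
Qed.

Lemma L1 (R : realType) (Mp Mc Mm : 'M[R]_3) ap ac am lp lm :
  Mp *m Mc *m Mm = 1%:M -> \det Mp = 1 -> Mp *m ap = lp *: ap -> Mm *m am = lm *: am ->
  lm != 0 ->
  lm * wedge3 ac ap (Mc *m am) = lp * wedge3 ap am (Mp *m ac).
Proof.
move=> h d ha hm l0.
have e := app3 h hm l0.
have := wmul Mp ac ap (Mc *m am); rewrite d ha e wZ2 wZ3 mul1r => <-.
rewrite [wedge3 (Mp *m ac) _ _]wcyc; by field.
Qed.


Lemma ord3_cases (x : 'I_3) : x = 0 \/ x = 1 \/ x = 2.
Proof.
case: x => [[|[|[|//]]] Hx].
- by left; apply: val_inj.
- by right; left; apply: val_inj.
- by right; right; apply: val_inj.
Qed.

Lemma nxt0 : nxt 0 = 1. Proof. by apply: val_inj. Qed.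
Lemma nxt1 : nxt 1 = 2. Proof. by apply: val_inj. Qed.
Lemma nxt2 : nxt 2 = 0. Proof. by apply: val_inj. Qed.
Lemma prv0 : prv 0 = 2. Proof. by apply: val_inj. Qed.
Lemma prv1 : prv 1 = 0. Proof. by apply: val_inj. Qed.
Lemma prv2 : prv 2 = 1. Proof. by apply: val_inj. Qed.

Lemma nxtnxt x : nxt (nxt x) = prv x.
Proof. by case: (ord3_cases x) => [->|[->|->]]; rewrite ?(nxt0, nxt1, nxt2, prv0, prv1, prv2). Qed.
Lemma prvnxt x : prv (nxt x) = x.
Proof. by case: (ord3_cases x) => [->|[->|->]]; rewrite ?(nxt0, nxt1, nxt2, prv0, prv1, prv2). Qed.
Lemma nxtprv x : nxt (prv x) = x.
Proof. by case: (ord3_cases x) => [->|[->|->]]; rewrite ?(nxt0, nxt1, nxt2, prv0, prv1, prv2). Qed.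
Lemma prvprv x : prv (prv x) = nxt x.
Proof. by case: (ord3_cases x) => [->|[->|->]]; rewrite ?(nxt0, nxt1, nxt2, prv0, prv1, prv2). Qed.

Lemma sum3perm (R : realType) (f : 'I_3 -> R) x : f 0 + f 1 + f 2 = f x + f (nxt x) + f (prv x).
Proof. case: (ord3_cases x) => [->|[->|->]]; rewrite ?(nxt0, nxt1, nxt2, prv0, prv1, prv2); ring. Qed.

Lemma cyc3 (R : realType) (rho : 'I_3 -> 'M[R]_3) :
  rho 2 *m rho 1 *m rho 0 = 1%:M ->
  forall x, rho (nxt x) *m rho x *m rho (prv x) = 1%:M.
Proof.
move=> h.
have h2 : rho 0 *m rho 2 *m rho 1 = 1%:M.
  by rewrite -mulmxA; apply: mulmx1C.
have h0 : rho 1 *m rho 0 *m rho 2 = 1%:M.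
  by rewrite -mulmxA; apply: mulmx1C.
by move=> x; case: (ord3_cases x) => [->|[->|->]]; rewrite ?(nxt0, nxt1, nxt2, prv0, prv1, prv2).
Qed.

Lemma pos_div_nz (R : realType) (a b c : R) : 0 < c * (a / b) -> a != 0 /\ b != 0.
Proof.
move=> h; split; apply/eqP => e; move: h; rewrite e ?invr0 !(mulr0, mul0r) ltxx //.
Qed.

Lemma pos6 (R : realType) (a b c d e f : R) : 0 < a / b * (c / d) * (e / f) ->
  [/\ a != 0, b != 0 & c != 0] /\ [/\ d != 0, e != 0 & f != 0].
Proof.
move=> h; split; split; apply/eqP => z; move: h; rewrite z ?invr0 !(mulr0, mul0r) ltxx //.
Qed.

Lemma lnM' (R : realType) (x y : R) : 0 < x -> 0 < y -> ln (x * y) = ln x + ln y.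
Proof. by move=> hx hy; rewrite lnM. Qed.
Lemma lnV' (R : realType) (x : R) : 0 < x -> ln (x^-1) = - ln x.
Proof. by move=> hx; rewrite lnV. Qed.

Lemma lnA (R : realType) (t a b c : R) : 0 < t -> 0 < a -> 0 < b -> 0 < c ->
  ln (t^-1 * (a * b / c)) = - ln t + ln a + ln b - ln c.
Proof.
move=> ht ha hb hc.
rewrite lnM' ?invr_gt0 ?divr_gt0 ?mulr_gt0 // lnV' // lnM' ?invr_gt0 ?mulr_gt0 //.
rewrite lnM' // lnV' //; ring.
Qed.

Lemma lnB (R : realType) (t a b : R) : 0 < t -> 0 < a -> 0 < b ->
  ln (t * (a * b)) = ln t + ln a + ln b.
Proof. move=> ht ha hb; rewrite lnM' ?mulr_gt0 // lnM' //; ring. Qed.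

Lemma lnC (R : realType) (t a b : R) : 0 < t -> 0 < a -> 0 < b ->
  ln (a / b * t) = ln a - ln b + ln t.
Proof. move=> ht ha hb; rewrite lnM' ?divr_gt0 // lnM' ?invr_gt0 // lnV' //. Qed.


Lemma pos_div_nz2 (R : realType) (a b c : R) : 0 < -(a / b) * c -> a != 0 /\ b != 0.
Proof.
move=> h; split; apply/eqP => e; move: h; rewrite e ?invr0 !(mulr0, mul0r, oppr0) ltxx //.
Qed.

Theorem proposition1 (R : realType) (rho : 'I_3 -> 'M[R]_3)
    (lam mu nu : 'I_3 -> R) (e1 e2 e3 : 'I_3 -> 'cV[R]_3) :
  (forall i, \det (rho i) = 1) ->
  rho 2%R *m rho 1%R *m rho 0%R = 1%:M ->
  (forall i, 0 < lam i /\ lam i < mu i /\ mu i < nu i) ->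
  (forall i, eigvec (rho i) (lam i) (e1 i) /\ eigvec (rho i) (mu i) (e2 i)
             /\ eigvec (rho i) (nu i) (e3 i)) ->
  let F := fun i : 'I_3 => ((e1 i, e2 i) : flag R) in
  let F' := fun i : 'I_3 => flag_act (rho (nxt i)) (F i) in
  0 < tplus_arg (F 0%R) (F 1%R) (F 2%R) ->
  0 < tminus_arg (F' 0%R) (F 1%R) (F 2%R) ->
  (forall j, 0 < sigma1_arg (F (nxt j)) (F (prv j)) (F j) (F' j)) ->
  (forall j, 0 < sigma2_arg (F (nxt j)) (F (prv j)) (F j) (F' j)) ->
  let tP := tplus (F 0%R) (F 1%R) (F 2%R) in
  let tM := tminus (F' 0%R) (F 1%R) (F 2%R) in
  let s1 := fun j => sigma1 (F (nxt j)) (F (prv j)) (F j) (F' j) in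
  let s2 := fun j => sigma2 (F (nxt j)) (F (prv j)) (F j) (F' j) in
  forall i : 'I_3,
    lam i = expR (3^-1 * s1 (nxt i) + 2 / 3 * s2 (nxt i)
                  + 2 / 3 * s1 (prv i) + 3^-1 * s2 (prv i)
                  + 2 / 3 * tP + 2 / 3 * tM)
    /\ mu i + nu i =
       (expR (- s1 (nxt i) - s2 (prv i)) + 1)
       * expR (3^-1 * s1 (nxt i) - 3^-1 * s2 (nxt i)
               - 3^-1 * s1 (prv i) + 3^-1 * s2 (prv i)
               - 3^-1 * tP - 3^-1 * tM).
Proof.
move=> hdet hprod hpos heig F F' htp htm hs1 hs2 tP tM s1 s2 i.
have cyc := cyc3 hprod.
have Ma x : rho x *m e1 x = lam x *: e1 x by case: (heig x) => [[_ ->] _].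
have Mb x : rho x *m e2 x = mu x *: e2 x by case: (heig x) => [_ [[_ ->] _]].
have lpos x : 0 < lam x by case: (hpos x).
have mpos x : 0 < mu x by case: (hpos x) => a [b _]; apply: lt_trans b.
have l0 x : lam x != 0 by rewrite gt_eqF.
have m0 x : mu x != 0 by rewrite gt_eqF.
have lmn x : lam x * mu x * nu x = 1.
  case: (heig x) => [h1 [h2 h3]]; case: (hpos x) => [a [b c]].
  rewrite -(hdet x); symmetry; apply: det_eig h1 h2 h3 _ _ _.
  - by rewrite lt_eqF.
  - by rewrite lt_eqF // (lt_trans b c).
  - by rewrite lt_eqF.
have hTT : tP + tM = - (ln (mu i) + ln (mu (nxt i)) + ln (mu (prv i))).
  have e : tplus_arg (F 0) (F 1) (F 2) * tminus_arg (F' 0) (F 1) (F 2)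
           = (mu 0 * mu 1 * mu 2)^-1.
    have htp' := htp.
    move: htp'; rewrite /tplus_arg /tminus_arg /F' /F /flag_act /w12 /w21 /=.
    move=> /pos6 [[? ? ?] [? ? ?]].
    rewrite /tplus_arg /tminus_arg /F' /F /flag_act /w12 /w21 /=.
    rewrite (_ : nxt 0 = 1); last by apply: val_inj.
    have a20 := app3 hprod (Ma 0) (l0 0).
    have b20 := app3 hprod (Mb 0) (m0 0).
    have g1 : wedge3 (rho 1 *m e1 0) (rho 1 *m e2 0) (e1 1) = wedge3 (e1 0) (e2 0) (e1 1) / lam 1.
      have := wmul (rho 1) (e1 0) (e2 0) (e1 1); rewrite hdet Ma wZ3 mul1r => <-.
      by field; repeat (apply/andP; split).
    have g2 : wedge3 (rho 1 *m e1 0) (e1 1) (e2 1) = wedge3 (e1 0) (e1 1) (e2 1) / (lam 1 * mu 1).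
      have := wmul (rho 1) (e1 0) (e1 1) (e2 1); rewrite hdet Ma Mb wZ2 wZ3 mul1r => <-.
      by field; repeat (apply/andP; split).
    have g3 : wedge3 (rho 1 *m e1 0) (rho 1 *m e2 0) (e1 2)
              = lam 2 * wedge3 (e1 0) (e2 0) (e1 2) / (lam 0 * mu 0).
      have := wmul (rho 2) (rho 1 *m e1 0) (rho 1 *m e2 0) (e1 2).
      rewrite hdet Ma a20 b20 wZ1 wZ2 wZ3 mul1r => <-.
      by field; repeat (apply/andP; split).
    have g4 : wedge3 (rho 1 *m e1 0) (e1 2) (e2 2)
              = lam 2 * mu 2 * wedge3 (e1 0) (e1 2) (e2 2) / lam 0.
      have := wmul (rho 2) (rho 1 *m e1 0) (e1 2) (e2 2).
      rewrite hdet Ma Mb a20 wZ1 wZ2 wZ3 mul1r => <-.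
      by field; repeat (apply/andP; split).
    rewrite g1 g2 g3 g4.
    by field; repeat (apply/andP; split).
  rewrite /tP /tM /tplus /tminus -lnM' // e lnV' ?mulr_gt0 // !lnM' ?mulr_gt0 //.
  by rewrite (sum3perm (fun x => ln (mu x)) i).
have cq : rho i *m rho (prv i) *m rho (nxt i) = 1%:M.
  by have := cyc (prv i); rewrite nxtprv prvprv.
have ci : rho (nxt i) *m rho i *m rho (prv i) = 1%:M := cyc i.
have hSn := Sm cq (hdet i) (Ma i) (Mb i) (Ma (nxt i)) (l0 (nxt i)).
have hPn := Sp (e1 (nxt i)) (hdet (prv i)) (Ma (prv i)) (Mb (prv i)).
have hSq := Sm ci (hdet (nxt i)) (Ma (nxt i)) (Mb (nxt i)) (Ma (prv i)) (l0 (prv i)).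
have hPq := Sp (e1 (prv i)) (hdet i) (Ma i) (Mb i).
have hL := L1 (e1 (prv i)) cq (hdet i) (Ma i) (Ma (nxt i)) (l0 (nxt i)).
have hD : wedge3 (e1 i) (e1 (nxt i)) (e1 (prv i)) = wedge3 (e1 (prv i)) (e1 i) (e1 (nxt i)).
  by rewrite [RHS]wcyc.
have hs1n := hs1 (nxt i); have hs2n := hs2 (nxt i).
have hs1q := hs1 (prv i); have hs2q := hs2 (prv i).
move: hs1n hs2n hs1q hs2q.
rewrite /sigma1_arg /sigma2_arg /F' /F /flag_act /w111 /w21 /= nxtnxt prvnxt nxtprv prvprv hD.
move=> hs1n hs2n hs1q hs2q.
rewrite /s1 /s2 /sigma1 /sigma2 /sigma1_arg /sigma2_arg /F' /F /flag_act /w111 /w21 /=.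
rewrite nxtnxt prvnxt nxtprv prvprv hD.
set D := wedge3 (e1 (prv i)) (e1 i) (e1 (nxt i)) in hs1n hs2n hs1q hs2q hL *.
set Nn := wedge3 (e1 (prv i)) (e1 i) (rho (prv i) *m e1 (nxt i)) in hs1n hs2n hL *.
set Nq := wedge3 (e1 i) (e1 (nxt i)) (rho i *m e1 (prv i)) in hs1q hs2q hL *.
set Wn' := wedge3 (e1 i) (e2 i) (rho (prv i) *m e1 (nxt i)) in hs1n hSn *.
set Wn := wedge3 (e1 i) (e2 i) (e1 (nxt i)) in hs1n hSn *.
set Pn' := wedge3 (e1 (prv i)) (e2 (prv i)) (rho (prv i) *m e1 (nxt i)) in hs2n hPn *.
set Pn := wedge3 (e1 (prv i)) (e2 (prv i)) (e1 (nxt i)) in hs2n hPn *.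
set Wq' := wedge3 (e1 (nxt i)) (e2 (nxt i)) (rho i *m e1 (prv i)) in hs1q hSq *.
set Wq := wedge3 (e1 (nxt i)) (e2 (nxt i)) (e1 (prv i)) in hs1q hSq *.
set Pq' := wedge3 (e1 i) (e2 i) (rho i *m e1 (prv i)) in hs2q hPq *.
set Pq := wedge3 (e1 i) (e2 i) (e1 (prv i)) in hs2q hPq *.
have [Wn'0 Wn0] := pos_div_nz hs1n.
have [D0 Nn0] := pos_div_nz2 hs1n.
have [Pn0 Pn'0] := pos_div_nz hs2n.
have [Wq'0 Wq0] := pos_div_nz hs1q.
have [_ Nq0] := pos_div_nz2 hs1q.
have [Pq0 Pq'0] := pos_div_nz hs2q.
have li0 := l0 i; have ln0 := l0 (nxt i); have lq0 := l0 (prv i).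
have mi0 := m0 i; have mn0 := m0 (nxt i); have mq0 := m0 (prv i).
pose tn := - (Nn / D); pose tq := - (Nq / D).
have V1n : - (D / Nn) * (Wn' / Wn) = tn^-1 * (lam i * mu i / lam (nxt i)).
  have eW : Wn' = lam i * mu i * Wn / lam (nxt i).
    by apply: (mulIf ln0); rewrite hSn; field; repeat (apply/andP; split).
  by rewrite eW /tn; field; repeat (apply/andP; split).
have V2n : - (Nn / D) * (Pn / Pn') = tn * (lam (prv i) * mu (prv i)).
  by rewrite -hPn /tn; field; repeat (apply/andP; split).
have V1q : - (D / Nq) * (Wq' / Wq) = tq^-1 * (lam (nxt i) * mu (nxt i) / lam (prv i)).
  have eW : Wq' = lam (nxt i) * mu (nxt i) * Wq / lam (prv i).
    by apply: (mulIf lq0); rewrite hSq; field; repeat (apply/andP; split).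
  by rewrite eW /tq; field; repeat (apply/andP; split).
have V2q : - (Nq / D) * (Pq / Pq') = tq * (lam i * mu i).
  by rewrite -hPq /tq; field; repeat (apply/andP; split).
have Vt : tq = lam (nxt i) / lam i * tn.
  have eN : Nq = lam (nxt i) * Nn / lam i.
    by apply: (mulIf li0); rewrite mulrC -hL; field; repeat (apply/andP; split).
  by rewrite /tq /tn eN; field; repeat (apply/andP; split).
have tnpos : 0 < tn.
  by move: hs2n; rewrite V2n pmulr_lgt0 // mulr_gt0.
have tqpos : 0 < tq.
  by move: hs2q; rewrite V2q pmulr_lgt0 // mulr_gt0.
rewrite V1n V2n V1q V2q.
rewrite !lnA ?lnB // Vt lnC //.
have key1 : forall y, y = ln (lam i) -> lam i = expR y.
  by move=> y ->; rewrite lnK // posrE.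
have enu : nu i = (lam i * mu i)^-1.
  apply: (mulIf (mulf_neq0 li0 mi0)); rewrite mulVf ?mulf_neq0 // -(lmn i); ring.
have key2 : forall A B, A = - (ln (lam i) + ln (mu i) + ln (mu i)) -> B = ln (mu i) ->
    mu i + nu i = (expR A + 1) * expR B.
  move=> A B -> ->; rewrite expRN !expRD !lnK ?posrE // enu.
  by field; repeat (apply/andP; split).
clearbody tP tM.
have eM : tM = - (ln (mu i) + ln (mu (nxt i)) + ln (mu (prv i))) - tP.
  by rewrite -hTT; ring.
split; [apply: key1 | apply: key2].
- by rewrite eM; field.
- ring.
- by rewrite eM; field.
Qed.
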